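(* Let $G$ be a graph of order $p$ with at least one edge and independence number $\alpha$. Then $str(G)\ge 2p-2\alpha+1$.
   Context: For a graph $G$ of order $p$, a numbering is a bijection $f:V(G)\to[1,p]$; $str_f(G)=\max\{f(u)+f(v): uv\in E(G)\}$ and $str(G)=\min_f str_f(G)$. *)

(* Defs.v *)
From mathcomp Require Import all_boot.
Set Implicit Arguments. Unset Strict Implicit. Unset Printing Implicit Defensive.

Definition simple_graph (T : finType) (e : rel T) : Prop :=
  symmetric e /\ irreflexive e.

(* A numbering is a bijection V -> [1, p].  We represent it by an injective
   finite function f : T -> 'I_#|T| (which is then a bijection onto 'I_#|T|),
   the label of x being (f x).+1 in [1, p]. *)
Definition numbering (T : finType) (f : {ffun T -> 'I_#|T|}) : bool :=
  injectiveb f.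

Definition label (T : finType) (f : {ffun T -> 'I_#|T|}) (x : T) : nat :=
  (f x).+1.

Definition str_f (T : finType) (e : rel T) (f : {ffun T -> 'I_#|T|}) : nat :=
  \max_(uv : T * T | e uv.1 uv.2) (label f uv.1 + label f uv.2).

(* str(G) = min over numberings f of str_f(G).  The default value 2*#|T|
   is an upper bound for every str_f, so it does not affect the minimum
   (and numberings always exist). *)
Definition str (T : finType) (e : rel T) : nat :=
  \big[minn/(#|T|.*2)]_(f : {ffun T -> 'I_#|T|} | numbering f) str_f e f.

Definition independent (T : finType) (e : rel T) (S : {set T}) : bool :=
  [forall x in S, forall y in S, ~~ e x y].

Definition independence_number (T : finType) (e : rel T) : nat :=
  \max_(S : {set T} | independent e S) #|S|.

(* Main.v *)
Require Import Defs.
From mathcomp Require Import all_boot.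
From mathcomp Require Import zify.

Lemma bound_f (T : finType) (e : rel T) (f : {ffun T -> 'I_#|T|}) :
  simple_graph e -> (exists u v : T, e u v) -> numbering f ->
  (2 * #|T| - 2 * independence_number e + 1 <= str_f e f)%N.
Proof.
move=> [esym eirr] [u [v euv]] /injectiveP finj.
set s := str_f e f.
have Hedge : forall x y, e x y -> (label f x + label f y <= s)%N.
  move=> x y exy; rewrite /s /str_f.
  exact: (@leq_bigmax_cond _ (fun uv : T * T => e uv.1 uv.2)
            (fun uv => label f uv.1 + label f uv.2) (x, y)).
have s1 : (1 <= s)%N by have := Hedge u v euv; rewrite /label; lia.
set C := [set x | 2 * label f x < s].
set k := (s.-1 %/ 2)%N.
have HC : (#|C| <= k)%N.
  have -> : #|C| = size (map (fun x => val (f x)) (enum C)).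
    by rewrite size_map cardE.
  rewrite -(size_iota 0 k); apply: uniq_leq_size.
    rewrite map_inj_uniq ?enum_uniq // => x y /val_inj; exact: finj.
  move=> n /mapP [x]; rewrite mem_enum inE /label => Hx ->.
  rewrite mem_iota /= /k. move: Hx; clearbody s; rewrite -subn1. move: (nat_of_ord (f x)) => m. lia.
have HS : independent e (~: C).
  apply/forallP => x; apply/implyP; rewrite !inE -leqNgt => Hx.
  apply/forallP => y; apply/implyP; rewrite !inE -leqNgt => Hy.
  case: (eqVneq x y) => [-> | nxy]; first by rewrite eirr.
  apply/negP => exy; have := Hedge x y exy.
  have : f x != f y by apply: contra nxy => /eqP /finj ->.
  move: Hx Hy; rewrite /label => Hx Hy /eqP nf.
  have nf' : (f x : nat) <> f y by move=> /val_inj.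
  lia.
have Ha : (#|~: C| <= independence_number e)%N.
  rewrite /independence_number.
  exact: (@leq_bigmax_cond _ (fun S : {set T} => independent e S)
            (fun S => #|S|) (~: C) HS).
have := cardsC C; rewrite /k in HC; lia.
Qed.

Theorem mainTheorem11 (T : finType) (e : rel T) :
  simple_graph e ->
  (exists u v : T, e u v) ->
  (2 * #|T| - 2 * independence_number e + 1 <= str e)%N.
Proof.
move=> Hg [u [v euv]].
have Ha : (1 <= independence_number e)%N.
  have Hi : independent e [set u].
    apply/forallP => x; apply/implyP; rewrite inE => /eqP ->.
    apply/forallP => y; apply/implyP; rewrite inE => /eqP ->.
    by rewrite (proj2 Hg).
  have := (@leq_bigmax_cond _ (fun S : {set T} => independent e S)
            (fun S => #|S|) [set u] Hi); rewrite cards1; exact.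
rewrite /str; apply: (big_ind (fun n => 2 * #|T| - 2 * independence_number e + 1 <= n)%N).
- have : (0 < #|T|)%N by apply/card_gt0P; exists u. rewrite -mul2n; lia.
- move=> x y Hx Hy; rewrite leq_min Hx Hy //.
- move=> f Hf; apply: bound_f => //; by exists u, v.
Qed.
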